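(* Let $A$ be a unital C*-algebra with unit $1_A$, let $P$ be a (right-reversible) Ore semigroup with identity $e$ and enveloping group $G = P^{-1}P$, and let $\alpha: P \to \mathrm{End}(A)$ be an action of $P$ on $A$ by injective unital-or-not endomorphisms $\alpha_p$, $p\in P$, with $\alpha_e=\mathrm{id}$. Let $(B, G, \beta)$ together with the injective $*$-homomorphism $\iota: A \to B$ be the minimal automorphic dilation of $(A,P,\alpha)$, i.e. $\beta$ is an action of $G$ on the C*-algebra $B$ by automorphisms with $\beta_p\circ\iota = \iota\circ\alpha_p$ for all $p\in P$ and $\bigcup_{p\in P}\beta_p^{-1}(\iota(A))$ dense in $B$. Let $u_g$, $g\in G$, be the unitaries in the multiplier algebra of the crossed product $B\rtimes_\beta G$ implementing $\beta$ (so $u_g b u_g^* = \beta_g(b)$). Then the net $(u_p^*\,\iota(1_A)\,u_p)_{p\in P}$, indexed by $P$ directed by the preorder $p\le r \iff r\in Pp$, is an approximate unit for $B$.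
   Context: A (right-reversible) Ore semigroup is a cancellative semigroup $P$ with $Ps\cap Pt\neq\emptyset$ for all $s,t\in P$; such $P$ embeds in a group $G$ with $G=P^{-1}P$ (the enveloping group, unique up to isomorphism). The preorder $p\le r$ iff $r\in Pp$ makes $P$ a directed set. For such a system with injective endomorphisms, a minimal automorphic dilation $(B,G,\beta,\iota)$ as described exists and is unique up to isomorphism (Laca). Note $u_p^*\iota(1_A)u_p=\beta_p^{-1}(\iota(1_A))\in B$. *)

(* Defs.v *)
From HB Require Import structures.
From mathcomp Require Import all_boot all_order all_algebra.
From mathcomp Require Import reals.
From mathcomp Require Import complex.
Set Implicit Arguments. Unset Strict Implicit. Unset Printing Implicit Defensive.
Import Order.TTheory GRing.Theory Num.Theory.
Local Open Scope ring_scope.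
Local Open Scope complex_scope.

Section CStarDefs.
Variable R : realType.

Definition is_cstar (V : lmodType R[i]) (mul : V -> V -> V) (star : V -> V)
    (nrm : V -> R) : Prop :=
  [/\
      [/\ (forall x y z, mul x (mul y z) = mul (mul x y) z),
      (forall x y z, mul (x + y) z = mul x z + mul y z),
      (forall x y z, mul x (y + z) = mul x y + mul x z) &
      (forall (a : R[i]) x y, mul (a *: x) y = a *: mul x y
                              /\ mul x (a *: y) = a *: mul x y)],
      [/\ (forall x, star (star x) = x),
          (forall x y, star (x + y) = star x + star y),
          (forall (a : R[i]) x, star (a *: x) = (a ^*)%C *: star x) &
          (forall x y, star (mul x y) = mul (star y) (star x))],
      [/\ (forall x, nrm x = 0 -> x = 0),
          (forall x, 0 <= nrm x),
          (forall x y, nrm (x + y) <= nrm x + nrm y),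
          (forall (a : R[i]) x, nrm (a *: x) = ComplexField.Normc.normc a * nrm x) &
          (forall x y, nrm (mul x y) <= nrm x * nrm y)],
      (forall u : nat -> V,
         (forall eps : R, 0 < eps -> exists N : nat, forall m n : nat,
             (N <= m)%N -> (N <= n)%N -> nrm (u m - u n) < eps) ->
         exists l : V, forall eps : R, 0 < eps -> exists N : nat,
             forall n : nat, (N <= n)%N -> nrm (u n - l) < eps) &
      (forall x, nrm (mul (star x) x) = nrm x ^+ 2)].

Record cstar := CStar {
  cs_car :> lmodType R[i];
  cs_mul : cs_car -> cs_car -> cs_car;
  cs_star : cs_car -> cs_car;
  cs_norm : cs_car -> R;
  cs_ax : is_cstar cs_mul cs_star cs_norm }.

Definition is_starhom (A B : cstar) (f : A -> B) : Prop :=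
  [/\ (forall x y, f (x + y) = f x + f y),
      (forall (a : R[i]) x, f (a *: x) = a *: f x),
      (forall x y, f (cs_mul x y) = cs_mul (f x) (f y)) &
      (forall x, f (cs_star x) = cs_star (f x))].

Definition is_starauto (B : cstar) (f : B -> B) : Prop :=
  is_starhom f /\ bijective f.

Definition cs_pos (B : cstar) (a : B) : Prop :=
  exists x : B, a = cs_mul (cs_star x) x.
Definition cs_le (B : cstar) (a b : B) : Prop := cs_pos (b - a).

Definition approx_unit (B : cstar) (I : Type) (le : I -> I -> Prop)
    (e : I -> B) : Prop :=
  [/\ (forall i, cs_pos (e i) /\ cs_norm (e i) <= 1),
      (forall i j, le i j -> cs_le (e i) (e j)) &
      (forall b : B, forall eps : R, 0 < eps -> exists i0 : I,
         forall i, le i0 i ->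
           cs_norm (cs_mul (e i) b - b) < eps /\
           cs_norm (cs_mul b (e i) - b) < eps)].

End CStarDefs.

Definition ore_monoid (P : Type) (op : P -> P -> P) (e : P) : Prop :=
  [/\ (forall p q r, op p (op q r) = op (op p q) r),
      (forall p, op e p = p /\ op p e = p),
      (forall p q r, op p q = op p r -> q = r),
      (forall p q r, op q p = op r p -> q = r) &
      (forall s t, exists a b, op a s = op b t)].

Definition ore_le (P : Type) (op : P -> P -> P) (p r : P) : Prop :=
  exists s, r = op s p.

Definition is_group (G : Type) (mul : G -> G -> G) (inv : G -> G) (one : G) :=
  [/\ (forall x y z, mul x (mul y z) = mul (mul x y) z),
      (forall x, mul one x = x /\ mul x one = x) &
      (forall x, mul (inv x) x = one /\ mul x (inv x) = one)].

Definition enveloping_group (P : Type) (op : P -> P -> P) (e : P)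
    (G : Type) (mul : G -> G -> G) (inv : G -> G) (one : G) (j : P -> G) :=
  [/\ is_group mul inv one, injective j, j e = one,
      (forall p q, j (op p q) = mul (j p) (j q)) &
      (forall g, exists p q, g = mul (inv (j p)) (j q))].

(* Main.v *)
Require Import Defs.
From HB Require Import structures.
From mathcomp Require Import all_boot all_order all_algebra.
From mathcomp Require Import reals.
From mathcomp Require Import complex.
From mathcomp Require Import lra.
Import Order.TTheory GRing.Theory Num.Theory.
Local Open Scope ring_scope.

Lemma normcN1 (R : realType) : ComplexField.Normc.normc (-1 : R[i]) = 1.
Proof. rewrite /ComplexField.Normc.normc /=. rewrite oppr0 expr0n /= addr0 sqrrN expr1n sqrtr1 //. Qed.

Lemma addf_N (V W : zmodType) (f : V -> W) :
  (forall x y, f (x + y) = f x + f y) -> forall x, f (- x) = - f x.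
Proof.
move=> H x.
have f0 : f 0 = 0.
  have := H 0 0; rewrite addr0 => h.
  by apply: (@addrI _ (f 0)); rewrite -h addr0.
by apply: (@addrI _ (f x)); rewrite -H !subrr f0.
Qed.

Lemma addf_B (V W : zmodType) (f : V -> W) :
  (forall x y, f (x + y) = f x + f y) -> forall x y, f (x - y) = f x - f y.
Proof. by move=> H x y; rewrite H (@addf_N _ _ f H). Qed.

Theorem lemma1p2 (R : realType) (A B : cstar R) (oneA : A)
  (P : Type) (op : P -> P -> P) (e : P)
  (G : Type) (gmul : G -> G -> G) (ginv : G -> G) (g1 : G) (j : P -> G)
  (alpha : P -> A -> A) (beta : G -> B -> B) (iota : A -> B) :
  (* A is unital with unit oneA *)
  (forall x : A, cs_mul oneA x = x /\ cs_mul x oneA = x) ->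
  (* P is an Ore semigroup with identity e, G its enveloping group *)
  ore_monoid op e ->
  enveloping_group op e gmul ginv g1 j ->
  (* alpha: action of P by injective *-endomorphisms, alpha_e = id *)
  (forall p, is_starhom (alpha p) /\ injective (alpha p)) ->
  (forall x, alpha e x = x) ->
  (forall p q x, alpha (op p q) x = alpha p (alpha q x)) ->
  (* (B, G, beta, iota): the minimal automorphic dilation *)
  is_starhom iota -> injective iota ->
  (forall g, is_starauto (beta g)) ->
  (forall x, beta g1 x = x) ->
  (forall g h x, beta (gmul g h) x = beta g (beta h x)) ->
  (forall p x, beta (j p) (iota x) = iota (alpha p x)) ->
  (forall (b : B) (eps : R), 0 < eps ->
     exists p x, cs_norm (b - beta (ginv (j p)) (iota x)) < eps) ->
  (* conclusion: (u_p^* iota(1_A) u_p)_p = (beta_p^{-1}(iota(1_A)))_p is an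
     approximate unit for B *)
  approx_unit (ore_le op) (fun p : P => beta (ginv (j p)) (iota oneA)).
Proof.
move=> hunit Hore Henv Halpha alpha_e alphaM Hiota iota_inj Hbeta beta1 betaM
  beta_iota Hdense.
case: (cs_ax A) => [[mAA mADl mADr mAZ] [sAK sAD sAZ sAM] _ _ _].
case: (cs_ax B) => [[mBA mBDl mBDr mBZ] [sBK sBD sBZ sBM]
  [nB0 nBge nBtri nBZ nBM] _ cB].
case: Henv => [[gA g1M gV] jinj je jM jgen].
case: Hiota => [iD iZ iM iS].
pose H g x := beta g (iota x).
have hD g : forall x y, H g (x + y) = H g x + H g y.
  by move=> x y; rewrite /H iD; case: (Hbeta g) => [[bD _ _ _] _].
have hM g : forall x y, H g (cs_mul x y) = cs_mul (H g x) (H g y).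
  by move=> x y; rewrite /H iM; case: (Hbeta g) => [[_ _ bM _] _].
have hS g : forall x, H g (cs_star x) = cs_star (H g x).
  by move=> x; rewrite /H iS; case: (Hbeta g) => [[_ _ _ bS] _].
have aD s : forall x y, alpha s (x + y) = alpha s x + alpha s y.
  by case: (Halpha s) => [[? _ _ _] _].
have aM s : forall x y, alpha s (cs_mul x y) = cs_mul (alpha s x) (alpha s y).
  by case: (Halpha s) => [[_ _ ? _] _].
have aS s : forall x, alpha s (cs_star x) = cs_star (alpha s x).
  by case: (Halpha s) => [[_ _ _ ?] _].
have star1 : cs_star oneA = oneA.
  have h1 := sAM (cs_star oneA) oneA.
  move: h1; rewrite (proj2 (hunit _)) sAK (proj2 (hunit _)) => h1.
  exact: esym h1.
have ore_step s p y : H (ginv (j (op s p))) (alpha s y) = H (ginv (j p)) y.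
  rewrite /H -beta_iota -betaM; congr beta.
  rewrite jM.
  move: (j s) (j p) => a b.
  rewrite -[LHS](proj2 (g1M _)) -(proj2 (gV b)) -gA.
  by rewrite [gmul a (gmul b _)]gA gA (proj1 (gV _)) (proj1 (g1M _)).

have qS p : cs_star (H (ginv (j p)) oneA) = H (ginv (j p)) oneA.
  by rewrite -hS star1.
have qI p : cs_mul (H (ginv (j p)) oneA) (H (ginv (j p)) oneA)
            = H (ginv (j p)) oneA.
  by rewrite -hM (proj1 (hunit _)).
have qpos p : cs_pos (H (ginv (j p)) oneA).
  by exists (H (ginv (j p)) oneA); rewrite qS qI.
have qn p : cs_norm (H (ginv (j p)) oneA) <= 1.
  have h := cB (H (ginv (j p)) oneA); rewrite qS qI in h.
  have := nBge (H (ginv (j p)) oneA).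
  move: h; set n := cs_norm _ => h hn.
  by nra.
have nN (y : B) : cs_norm (- y) = cs_norm y.
  by rewrite -scaleN1r nBZ normcN1 mul1r.
have mulBr (x y z : B) : cs_mul x (y - z) = cs_mul x y - cs_mul x z.
  exact: (@addf_B _ _ (cs_mul x) (mBDr x) y z).
have mulBl (x y z : B) : cs_mul (y - z) x = cs_mul y x - cs_mul z x.
  exact: (@addf_B _ _ (fun a => cs_mul a x) (fun a b => mBDl a b x) y z).
split.
- by move=> i; split; [exact: qpos | exact: qn].
- move=> p r [s ->].
  rewrite /cs_le.
  set f := alpha s oneA.
  have fS : cs_star f = f by rewrite /f -aS star1.
  have fI : cs_mul f f = f by rewrite /f -aM (proj1 (hunit _)).
  have -> : beta (ginv (j p)) (iota oneA) = H (ginv (j (op s p))) f.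
    by rewrite ore_step.
  have -> : beta (ginv (j (op s p))) (iota oneA) = H (ginv (j (op s p))) oneA by [].
  rewrite -(@addf_B _ _ (H (ginv (j (op s p)))) (hD _)).
  exists (H (ginv (j (op s p))) (oneA - f)).
  rewrite -hS -hM; congr H.
  rewrite (@addf_B _ _ _ sAD) star1 fS.
  have mBr (x y z : A) : cs_mul x (y - z) = cs_mul x y - cs_mul x z.
    exact: (@addf_B _ _ (cs_mul x) (mADr x) y z).
  have mBl (x y z : A) : cs_mul (y - z) x = cs_mul y x - cs_mul z x.
    exact: (@addf_B _ _ (fun a => cs_mul a x) (fun a b => mADl a b x) y z).
  rewrite mBl !mBr (proj1 (hunit _)) (proj2 (hunit _)) fI subrr subr0.
  by rewrite (proj1 (hunit _)).
- move=> b eps eps0.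
  have eps2 : 0 < eps / 2 by rewrite divr_gt0.
  have [p [x hb]] := Hdense b (eps / 2) eps2.
  exists p => i [s ->].
  set c := beta (ginv (j p)) (iota x).
  have cE : c = H (ginv (j (op s p))) (alpha s x) by rewrite ore_step.
  set q := beta (ginv (j (op s p))) (iota oneA).
  have qc : cs_mul q c = c by rewrite cE /q -hM (proj1 (hunit _)).
  have cq : cs_mul c q = c by rewrite cE /q -hM (proj2 (hunit _)).
  have nq : cs_norm q <= 1 by exact: qn.
  have nq0 : 0 <= cs_norm q by exact: nBge.
  have nd0 : 0 <= cs_norm (b - c) by exact: nBge.
  have key : cs_norm q * cs_norm (b - c) <= cs_norm (b - c).
    by rewrite ler_piMl.
  split.
  + have -> : cs_mul q b - b = cs_mul q (b - c) - (b - c).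
      by rewrite mulBr qc opprB addrA subrK.
    apply: (le_lt_trans (nBtri _ _)); rewrite nN.
    apply: (le_lt_trans (lerD (nBM _ _) (lexx _))).
    lra.
  + have -> : cs_mul b q - b = cs_mul (b - c) q - (b - c).
      by rewrite mulBl cq opprB addrA subrK.
    apply: (le_lt_trans (nBtri _ _)); rewrite nN.
    apply: (le_lt_trans (lerD (nBM _ _) (lexx _))).
    have key' : cs_norm (b - c) * cs_norm q <= cs_norm (b - c).
      by rewrite mulrC.
    lra.
Qed.
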